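(* Let $f:\mathcal C_n\to\mathbb R$, let $\nu$ be the law of $X_n^f$, and let $D=\mathcal D(f)$ and $L_2$ be as in the context. Let $\varepsilon>0$ and let $\theta\in\mathbb R^n$ satisfy $\|\theta\|_2\le\varepsilon\sqrt n$, $\|\theta\|_\infty\le\tfrac14$, and $$\mathrm{Tr}\,\mathcal H(\tau_\theta\nu)\le256\,\frac{n^{1/3}D^{2/3}}{\varepsilon^{2/3}}.$$ Let $\xi_\theta$ be the product measure on $\mathcal C_n$ with the same coordinate means as $\tau_\theta\nu$, and let $Y\sim\xi_\theta$. Then $$\mathbb E\big\|\tanh(\nabla f(Y))-\mathbb EY\big\|_1\le64L_2\frac{n^{2/3}D^{1/3}}{\varepsilon^{1/3}}+\varepsilon n.$$
   Context: Notation. $\mathcal C_n=\{-1,1\}^n$ and $\mu$ is the uniform measure on $\mathcal C_n$. $\|x\|_1=\sum_i|x_i|$, and $\tanh$ acts entrywise. Discrete calculus. $\partial_if(y)=\tfrac12\big(f(y^{i\to1})-f(y^{i\to-1})\big)$ and $\nabla f=(\partial_if)_i$. Gibbs distribution. $X_n^f$ is the random vector in $\mathcal C_n$ with $\Pr[X_n^f=x]\propto e^{f(x)}$. Parameters. $\mathcal D(f)=\mathbb E\sup_{v\in\{\nabla f(y):y\in\mathcal C_n\}\cup\{0\}}\langle v,\Gamma\rangle$, with $\Gamma$ standard Gaussian in $\mathbb R^n$. $L_2=\max\{1,\max_{x\ne y\in\mathcal C_n}\|\nabla f(x)-\nabla f(y)\|_1/\|x-y\|_1\}$. Tilts. For $\theta\in\mathbb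 R^n$, $\frac{d\tau_\theta\nu}{d\nu}(y)=e^{\langle\theta,y\rangle}/\int e^{\langle\theta,z\rangle}d\nu(z)$. The matrix $\mathcal H$. For a fully supported probability measure $\tilde\nu$ on $\mathcal C_n$, let $f_{\tilde\nu}=\log(d\tilde\nu/d\mu)$ and $$\mathcal H(\tilde\nu)=\int\tanh(\nabla f_{\tilde\nu})^{\otimes2}d\tilde\nu-\Big(\int\tanh(\nabla f_{\tilde\nu})d\tilde\nu\Big)^{\otimes2},$$ the covariance matrix of $\tanh(\nabla f_{\tilde\nu}(X))$ for $X\sim\tilde\nu$. *)

(* Defs.v *)
From Stdlib Require Import Reals Lra Lia Arith.
Open Scope R_scope.

(** Vectors of R^n are represented as functions nat -> R (only the
    coordinates i < n matter). *)
Definition vec := nat -> R.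

Fixpoint rsum (N : nat) (g : nat -> R) : R :=
  match N with O => 0 | S m => rsum m g + g m end.
Fixpoint rprod (N : nat) (g : nat -> R) : R :=
  match N with O => 1 | S m => rprod m g * g m end.
Fixpoint rmaxl (N : nat) (a : R) (g : nat -> R) : R :=
  match N with O => a | S m => Rmax (rmaxl m a g) (g m) end.

(** The hypercube C_n = {-1,1}^n: its 2^n points are enumerated by
    k < 2^n, with coordinate i equal to 1 iff bit i of k is set. *)
Definition ncube (n : nat) : nat := (2 ^ n)%nat.
Definition cube_pt (k : nat) : vec :=
  fun i => if Nat.testbit k i then 1 else -1.

Definition dot (n : nat) (a b : vec) : R := rsum n (fun i => a i * b i).
Definition norm1 (n : nat) (a : vec) : R := rsum n (fun i => Rabs (a i)).
Definition norm2 (n : nat) (a : vec) : R := sqrt (rsum n (fun i => a i ^ 2)).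


Definition upd (x : vec) (i : nat) (b : R) : vec :=
  fun j => if Nat.eqb j i then b else x j.
Definition dpart (f : vec -> R) (i : nat) (y : vec) : R :=
  (f (upd y i 1) - f (upd y i (-1))) / 2.

(** A probability measure on C_n is given by its mass function p
    (evaluated on cube points). Expectation: *)
Definition expect (n : nat) (p : vec -> R) (g : vec -> R) : R :=
  rsum (ncube n) (fun k => p (cube_pt k) * g (cube_pt k)).

Definition gibbs (n : nat) (f : vec -> R) : vec -> R :=
  fun x => exp (f x) / rsum (ncube n) (fun k => exp (f (cube_pt k))).

Definition tilt (n : nat) (theta : vec) (p : vec -> R) : vec -> R :=
  fun x => p x * exp (dot n theta x) / expect n p (fun y => exp (dot n theta y)).

(** f_{nu~} = log (d nu~ / d mu), mu uniform on C_n (mass 2^{-n}). *)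
Definition log_dens (n : nat) (p : vec -> R) : vec -> R :=
  fun x => ln (INR (ncube n) * p x).

Definition Hmat (n : nat) (p : vec -> R) (i j : nat) : R :=
  let t := fun l x => tanh (dpart (log_dens n p) l x) in
  expect n p (fun x => t i x * t j x)
  - expect n p (t i) * expect n p (t j).

Definition trace (n : nat) (M : nat -> nat -> R) : R := rsum n (fun i => M i i).

Definition prod_meas (n : nat) (m : vec) : vec -> R :=
  fun x => rprod n (fun i => (1 + m i * x i) / 2).

Definition xi_theta (n : nat) (f : vec -> R) (theta : vec) : vec -> R :=
  prod_meas n (fun i => expect n (tilt n theta (gibbs n f)) (fun x => x i)).

Definition grad_diff_ratio (n : nat) (f : vec -> R) (k l : nat) : R :=
  norm1 n (fun i => dpart f i (cube_pt k) - dpart f i (cube_pt l))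
  / norm1 n (fun i => cube_pt k i - cube_pt l i).
Definition L2 (n : nat) (f : vec -> R) : R :=
  rmaxl (ncube n) 1 (fun k => rmaxl (ncube n) 1 (fun l =>
    if Nat.eqb k l then 1 else grad_diff_ratio n f k l)).

(** D(f) = E sup_{v in {grad f(y)} u {0}} <v, Gamma>, Gamma ~ N(0, I_n).
    The Gaussian expectation is the (absolutely convergent) integral of the
    continuous function  z |-> sup(z) * phi_n(z)  over R^n; we characterise
    its value as the limit of Riemann sums over the grid (Z/K)^n cap [-K,K]^n,
    K = N+1, as N -> infinity. *)
Definition sup_lin (n : nat) (f : vec -> R) (z : vec) : R :=
  rmaxl (ncube n) 0 (fun k => dot n (fun i => dpart f i (cube_pt k)) z).
Definition gauss_dens (n : nat) (z : vec) : R :=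
  exp (- dot n z z / 2) / (sqrt (2 * PI)) ^ n.
Definition grid_M (N : nat) : nat := (2 * S N * S N + 1)%nat.
Definition grid_pt (N : nat) (j : nat) : vec :=
  fun i => - INR (S N) + INR ((j / grid_M N ^ i) mod grid_M N) / INR (S N).
Definition gauss_riemann (n : nat) (f : vec -> R) (N : nat) : R :=
  rsum (grid_M N ^ n)
    (fun j => sup_lin n f (grid_pt N j) * gauss_dens n (grid_pt N j))
  * (/ INR (S N)) ^ n.
Definition is_Df (n : nat) (f : vec -> R) (D : R) : Prop :=
  Un_cv (gauss_riemann n f) D.

(** Real power x^a for x >= 0, a > 0, with 0^a = 0 (Rpower 0 a = 1 in Stdlib). *)
Definition pw (x a : R) : R := if Rlt_dec 0 x then Rpower x a else 0.

(* Main.v *)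
Require Import Defs.
From Stdlib Require Import Reals Lra Lia Arith FunctionalExtensionality.
Open Scope R_scope.

Lemma cosh_pos x : 0 < cosh x.
Proof. unfold cosh. pose proof (exp_pos x). pose proof (exp_pos (-x)). lra. Qed.

Lemma cosh_sinh x : cosh x * cosh x - sinh x * sinh x = 1.
Proof.
  unfold cosh, sinh.
  assert (exp x * exp (-x) = 1) by (rewrite <- exp_plus; replace (x + -x) with 0 by ring; apply exp_0).
  nra.
Qed.

Lemma tanh_lip a b : Rabs (tanh a - tanh b) <= Rabs (a - b).
Proof.
  destruct (MVT_abs tanh (fun x => / (cosh x * cosh x)) b a) as [c [Hc _]].
  { intros c _. unfold tanh.
    replace (/ (cosh c * cosh c)) with ((cosh c * cosh c - sinh c * sinh c) / (cosh c)²).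
    2:{ rewrite cosh_sinh. unfold Rsqr. field. apply Rgt_not_eq, cosh_pos. }
    apply derivable_pt_lim_div; [apply derivable_pt_lim_sinh|apply derivable_pt_lim_cosh|].
    apply Rgt_not_eq, cosh_pos. }
  rewrite Hc.
  pose proof (cosh_sinh c). pose proof (cosh_pos c).
  assert (0 < / (cosh c * cosh c) <= 1).
  { split. apply Rinv_0_lt_compat; nra.
    rewrite <- Rinv_1. apply Rinv_le_contravar; nra. }
  rewrite Rabs_pos_eq by lra.
  pose proof (Rabs_pos (a - b)). nra.
Qed.

Lemma tanh_ln a b : 0 < a -> 0 < b -> tanh ((ln a - ln b) / 2) = (a - b) / (a + b).
Proof.
  intros Ha Hb. unfold tanh, sinh, cosh.
  set (y := (ln a - ln b) / 2).
  assert (E1 : exp y * exp y = a / b).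
  { rewrite <- exp_plus. replace (y + y) with (ln a + - ln b) by (unfold y; field).
    rewrite exp_plus, exp_ln by auto. rewrite <- ln_Rinv by auto. rewrite exp_ln.
    reflexivity. apply Rinv_0_lt_compat; auto. }
  assert (E2 : exp (-y) = / exp y) by apply exp_Ropp.
  rewrite E2. pose proof (exp_pos y).
  assert (exp y * exp y * b = a) by (rewrite E1; field; lra).
  field_simplify_eq; try split; try lra; try nra.
  all: try (apply Rgt_not_eq; nra).
Qed.

Lemma rsum_ext N g g' : (forall k, (k < N)%nat -> g k = g' k) -> rsum N g = rsum N g'.
Proof. induction N; simpl; intros H; auto. rewrite IHN by (intros; apply H; lia). rewrite H by lia. auto. Qed.
Lemma rsum_le N g g' : (forall k, (k < N)%nat -> g k <= g' k) -> rsum N g <= rsum N g'.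
Proof. induction N; simpl; intros H; [lra|]. pose proof (H N ltac:(lia)). pose proof (IHN ltac:(intros; apply H; lia)). lra. Qed.
Lemma rsum_plus N g g' : rsum N (fun k => g k + g' k) = rsum N g + rsum N g'.
Proof. induction N; simpl; [lra|]. rewrite IHN. lra. Qed.
Lemma rsum_minus N g g' : rsum N (fun k => g k - g' k) = rsum N g - rsum N g'.
Proof. induction N; simpl; [lra|]. rewrite IHN. lra. Qed.
Lemma rsum_scal N c g : rsum N (fun k => c * g k) = c * rsum N g.
Proof. induction N; simpl; [lra|]. rewrite IHN. lra. Qed.
Lemma rsum_const N c : rsum N (fun _ => c) = INR N * c.
Proof. induction N; simpl rsum; [simpl; lra|]. rewrite IHN, S_INR. lra. Qed.
Lemma rsum_abs N g : Rabs (rsum N g) <= rsum N (fun k => Rabs (g k)).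
Proof. induction N; simpl. rewrite Rabs_R0; lra.
  eapply Rle_trans; [apply Rabs_triang|]. lra. Qed.
Lemma rsum_nonneg N g : (forall k, (k < N)%nat -> 0 <= g k) -> 0 <= rsum N g.
Proof. intros H. replace 0 with (rsum N (fun _ => 0)). apply rsum_le; auto.
  clear H; induction N; simpl; lra. Qed.
Lemma rsum_swap A B (F : nat -> nat -> R) :
  rsum A (fun k => rsum B (fun i => F k i)) = rsum B (fun i => rsum A (fun k => F k i)).
Proof. induction A; simpl. clear; induction B; simpl; lra.
  rewrite IHA, <- rsum_plus. reflexivity. Qed.
Lemma rsum_add A B g : rsum (A + B) g = rsum A g + rsum B (fun k => g (A + k)%nat).
Proof. induction B; simpl. rewrite Nat.add_0_r; lra. rewrite Nat.add_succ_r; simpl. rewrite IHB. lra. Qed.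
Lemma rsum_tele N (a : nat -> R) : rsum N (fun k => a k - a (S k)) = a O - a N.
Proof. induction N; simpl; [lra|]. rewrite IHN. lra. Qed.
Lemma rsum_single N i (a : nat -> R) : (i < N)%nat ->
  (forall k, (k < N)%nat -> k <> i -> a k = 0) -> rsum N a = a i.
Proof. induction N; intros Hi H; [lia|]. simpl.
  destruct (Nat.eq_dec i N). subst. rewrite (rsum_ext _ _ (fun _ => 0)).
  clear; induction N; simpl; lra. intros; apply H; lia.
  rewrite IHN by (try lia; intros; apply H; lia). rewrite (H N) by lia. lra. Qed.
Lemma rprod_ext N g g' : (forall k, (k < N)%nat -> g k = g' k) -> rprod N g = rprod N g'.
Proof. induction N; simpl; intros H; auto. rewrite IHN by (intros; apply H; lia). rewrite H by lia. auto. Qed.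

Lemma cs_sq N (s : nat -> R) : (rsum N s) ^ 2 <= INR N * rsum N (fun i => s i ^ 2).
Proof.
  induction N; simpl rsum. simpl; lra.
  rewrite S_INR.
  set (S0 := rsum N s) in *. set (Q := rsum N (fun i => s i ^ 2)) in *.
  assert (HQ : 0 <= Q) by (apply rsum_nonneg; intros; nra).
  pose proof (pos_INR N) as Hn.
  assert (2 * S0 * s N <= Q + INR N * (s N)^2).
  { destruct (Rle_lt_dec (INR N) 0).
    - assert (INR N = 0) by lra. rewrite H in IHN. assert (S0 = 0) by nra. rewrite H0. nra.
    - assert (INR N * (Q + INR N * s N ^ 2) - INR N * (2 * S0 * s N) >= 0).
      { pose proof (pow2_ge_0 (S0 - INR N * s N)).
        assert (INR N * (Q + INR N * s N ^ 2) - INR N * (2 * S0 * s N) >= S0 ^ 2 - 2 * S0 * (INR N * s N) + (INR N * s N)^2) by (replace (INR N * (Q + INR N * s N ^ 2) - INR N * (2 * S0 * s N)) with (INR N * Q - 2*S0*(INR N * s N) + (INR N * s N)^2) by ring; lra).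
        nra. }
      assert (INR N * (Q + INR N * s N ^ 2 - 2 * S0 * s N) >= 0) by nra.
      assert (Q + INR N * s N ^ 2 - 2 * S0 * s N >= 0).
      { destruct (Rge_dec (Q + INR N * s N ^ 2 - 2 * S0 * s N) 0); auto. nra. }
      lra. }
  change (rsum N (fun i : nat => s i * (s i * 1))) with Q.
  replace ((S0 + s N) ^ 2) with (S0^2 + 2*S0*s N + s N^2) by ring.
  replace ((INR N + 1) * (Q + s N * (s N * 1))) with (INR N * Q + (Q + INR N * s N^2) + s N ^2) by ring.
  lra.
Qed.

Lemma Rabs_le_inv2 a b : Rabs a <= b -> - b <= a <= b.
Proof. unfold Rabs. destruct (Rcase_abs a); intros; lra. Qed.

Lemma lt_pow2_bits a N : (a < 2 ^ N)%nat <-> (forall m, (N <= m)%nat -> Nat.testbit a m = false).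
Proof.
  split.
  - intros H m Hm. destruct (Nat.eq_dec a 0). subst; apply Nat.bits_0.
    apply Nat.bits_above_log2. apply Nat.log2_lt_pow2 in H; lia.
  - intros H. destruct (Nat.eq_dec a 0). subst. pose proof (Nat.pow_nonzero 2 N). lia.
    apply Nat.log2_lt_pow2; [lia|].
    destruct (Nat.lt_ge_cases (Nat.log2 a) N); auto.
    pose proof (Nat.bit_log2 a n). rewrite (H _ H0) in H1. congruence.
Qed.

Lemma upd_eq x i b : upd x i b i = b.
Proof. unfold upd. rewrite Nat.eqb_refl. auto. Qed.
Lemma upd_neq x i b j : j <> i -> upd x i b j = x j.
Proof. intros. unfold upd. destruct (Nat.eqb_spec j i); auto; lia. Qed.
Lemma upd_upd x i a b : upd (upd x i a) i b = upd x i b.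
Proof. apply functional_extensionality; intros j. unfold upd. destruct (Nat.eqb j i); auto. Qed.
Lemma upd_comm x i j a b : i <> j -> upd (upd x i a) j b = upd (upd x j b) i a.
Proof. intros H. apply functional_extensionality; intros k. unfold upd.
  destruct (Nat.eqb_spec k j), (Nat.eqb_spec k i); auto; lia. Qed.

Lemma cube_pt_high k n m : (k < 2 ^ n)%nat -> (n <= m)%nat -> cube_pt k m = -1.
Proof. intros. unfold cube_pt. rewrite (proj1 (lt_pow2_bits k n) H m H0). auto. Qed.

Lemma cube_pt_self k n : (k < 2 ^ n)%nat -> upd (cube_pt k) n (-1) = cube_pt k.
Proof. intros. apply functional_extensionality; intros j. unfold upd.
  destruct (Nat.eqb_spec j n); auto. subst. symmetry; apply (cube_pt_high k n); lia. Qed.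

Lemma cube_pt_shift k n : (k < 2 ^ n)%nat -> cube_pt (2 ^ n + k) = upd (cube_pt k) n 1.
Proof.
  intros Hk. apply functional_extensionality; intros j. unfold upd, cube_pt.
  destruct (Nat.eqb_spec j n).
  - subst. rewrite (Nat.testbit_unique (2^n + k) n true k 0); auto. simpl; lia.
  - destruct (Nat.lt_ge_cases j n).
    + rewrite <- (Nat.mod_pow2_bits_low (2^n + k) n j) by auto.
      replace ((2 ^ n + k) mod 2 ^ n)%nat with k; auto.
      rewrite Nat.add_comm. rewrite <- (Nat.mul_1_l (2^n)) at 1.
      rewrite Nat.Div0.mod_add. rewrite Nat.mod_small; auto.
    + assert (2 ^ n + k < 2 ^ S n)%nat by (simpl; lia).
      rewrite (proj1 (lt_pow2_bits _ _) H0 j) by lia.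
      rewrite (proj1 (lt_pow2_bits _ _) Hk j) by lia. auto.
Qed.

Definition iscube (n : nat) (x : vec) : Prop := exists k, (k < 2 ^ n)%nat /\ x = cube_pt k.

Lemma iscube_pt n k : (k < 2 ^ n)%nat -> iscube n (cube_pt k).
Proof. intros; exists k; auto. Qed.

Lemma upd_cube_1 k i : upd (cube_pt k) i 1 = cube_pt (Nat.setbit k i).
Proof. apply functional_extensionality; intros j. unfold upd, cube_pt.
  destruct (Nat.eqb_spec j i). subst. rewrite Nat.setbit_eq; auto.
  rewrite Nat.setbit_neq; auto. Qed.
Lemma upd_cube_m1 k i : upd (cube_pt k) i (-1) = cube_pt (Nat.clearbit k i).
Proof. apply functional_extensionality; intros j. unfold upd, cube_pt.
  destruct (Nat.eqb_spec j i). subst. rewrite Nat.clearbit_eq; auto.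
  rewrite Nat.clearbit_neq; auto. Qed.

Lemma setbit_lt k i n : (k < 2 ^ n)%nat -> (i < n)%nat -> (Nat.setbit k i < 2 ^ n)%nat.
Proof. intros H Hi. apply lt_pow2_bits. intros m Hm. rewrite Nat.setbit_neq by lia.
  apply (proj1 (lt_pow2_bits _ _) H); auto. Qed.
Lemma clearbit_lt k i n : (k < 2 ^ n)%nat -> (Nat.clearbit k i < 2 ^ n)%nat.
Proof. intros H. apply lt_pow2_bits. intros m Hm. rewrite Nat.clearbit_eqb.
  rewrite (proj1 (lt_pow2_bits _ _) H); auto. Qed.

Lemma iscube_upd n x i b : iscube n x -> (i < n)%nat -> (b = 1 \/ b = -1) -> iscube n (upd x i b).
Proof. intros [k [Hk ->]] Hi [-> | ->].
  rewrite upd_cube_1. apply iscube_pt, setbit_lt; auto.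
  rewrite upd_cube_m1. apply iscube_pt, clearbit_lt; auto. Qed.

Lemma iscube_val n x i : iscube n x -> x i = 1 \/ x i = -1.
Proof. intros [k [_ ->]]. unfold cube_pt. destruct (Nat.testbit k i); auto. Qed.

Lemma iscube_high n x m : iscube n x -> (n <= m)%nat -> x m = -1.
Proof. intros [k [Hk ->]] Hm. apply (cube_pt_high k n); auto. Qed.

Definition cs (n : nat) (G : vec -> R) : R := rsum (ncube n) (fun k => G (cube_pt k)).

Lemma cs_ext n G G' : (forall x, iscube n x -> G x = G' x) -> cs n G = cs n G'.
Proof. intros H. unfold cs. apply rsum_ext. intros. apply H, iscube_pt; auto. Qed.
Lemma cs_le n G G' : (forall x, iscube n x -> G x <= G' x) -> cs n G <= cs n G'.
Proof. intros H. unfold cs. apply rsum_le. intros. apply H, iscube_pt; auto. Qed.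
Lemma cs_plus n G G' : cs n (fun x => G x + G' x) = cs n G + cs n G'.
Proof. unfold cs. apply rsum_plus. Qed.
Lemma cs_minus n G G' : cs n (fun x => G x - G' x) = cs n G - cs n G'.
Proof. unfold cs. apply rsum_minus. Qed.
Lemma cs_scal n c G : cs n (fun x => c * G x) = c * cs n G.
Proof. unfold cs. apply rsum_scal. Qed.
Lemma cs_abs n G : Rabs (cs n G) <= cs n (fun x => Rabs (G x)).
Proof. unfold cs. apply rsum_abs. Qed.
Lemma cs_rsum n N (F : nat -> vec -> R) : cs n (fun x => rsum N (fun i => F i x)) = rsum N (fun i => cs n (F i)).
Proof. unfold cs. apply rsum_swap. Qed.

Lemma cs_S n G : cs (S n) G = cs n (fun x => G (upd x n 1)) + cs n (fun x => G (upd x n (-1))).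
Proof.
  unfold cs, ncube. replace (2 ^ S n)%nat with (2 ^ n + 2 ^ n)%nat by (simpl; lia).
  rewrite rsum_add. rewrite Rplus_comm. f_equal.
  - apply rsum_ext. intros. rewrite cube_pt_shift; auto.
  - apply rsum_ext. intros. rewrite cube_pt_self; auto.
Qed.

Lemma cs_sym n i G : (i < n)%nat ->
  cs n G = cs n (fun x => (G (upd x i 1) + G (upd x i (-1))) / 2).
Proof.
  revert i G. induction n; intros i G Hi; [lia|].
  rewrite !cs_S. destruct (Nat.eq_dec i n).
  - subst.
    set (H := fun x => (G (upd x n 1) + G (upd x n (-1))) / 2).
    assert (E1 : cs n (fun x => (G (upd (upd x n 1) n 1) + G (upd (upd x n 1) n (-1))) / 2) = cs n H)
      by (apply cs_ext; intros; rewrite !upd_upd; auto).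
    assert (E2 : cs n (fun x => (G (upd (upd x n (-1)) n 1) + G (upd (upd x n (-1)) n (-1))) / 2) = cs n H)
      by (apply cs_ext; intros; rewrite !upd_upd; auto).
    rewrite E1, E2. unfold H. rewrite <- cs_plus.
    replace (cs n (fun x => G (upd x n 1)) + cs n (fun x => G (upd x n (-1))))
      with (cs n (fun x => G (upd x n 1) + G (upd x n (-1)))) by apply cs_plus.
    rewrite <- cs_plus. apply cs_ext; intros; lra.
  - rewrite (IHn i (fun x => G (upd x n 1))) by lia.
    rewrite (IHn i (fun x => G (upd x n (-1)))) by lia.
    f_equal; apply cs_ext; intros x _; rewrite !(upd_comm _ n i) by lia; auto.
Qed.

Lemma expect_cs n p g : expect n p g = cs n (fun x => p x * g x).
Proof. reflexivity. Qed.

Definition Eop (a : R) (k : nat) (v : vec -> R) : vec -> R :=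
  fun x => (1 + a) / 2 * v (upd x k 1) + (1 - a) / 2 * v (upd x k (-1)).

Fixpoint U (m : vec) (k : nat) (v : vec -> R) : vec -> R :=
  match k with O => v | S k' => U m k' (Eop (m k') k' v) end.

Lemma prod_meas_upd n m x b : prod_meas n m (upd x n b) = prod_meas n m x.
Proof. unfold prod_meas. apply rprod_ext. intros. rewrite upd_neq by lia. auto. Qed.

Lemma expect_prod_S n m v :
  expect (S n) (prod_meas (S n) m) v = expect n (prod_meas n m) (Eop (m n) n v).
Proof.
  rewrite !expect_cs, cs_S, <- cs_plus. apply cs_ext. intros x _.
  unfold Eop. change (prod_meas (S n) m) with (fun y => prod_meas n m y * ((1 + m n * y n) / 2)).
  cbv beta. rewrite !prod_meas_upd, !upd_eq. field.
Qed.

Lemma expect_prod_U n m v : expect n (prod_meas n m) v = U m n v (cube_pt 0).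
Proof.
  revert v. induction n; intros v.
  - unfold expect, ncube; simpl. unfold prod_meas; simpl. ring.
  - rewrite expect_prod_S, IHn. reflexivity.
Qed.

Lemma expect_prod_one n m : expect n (prod_meas n m) (fun _ => 1) = 1.
Proof.
  induction n. unfold expect, ncube, prod_meas; simpl. ring.
  rewrite expect_prod_S. transitivity (expect n (prod_meas n m) (fun _ => 1)); [|exact IHn].
  unfold expect. apply rsum_ext; intros. unfold Eop. field.
Qed.

Lemma expect_const n p c : expect n p (fun _ => c) = c * expect n p (fun _ => 1).
Proof. rewrite !expect_cs. rewrite <- (cs_scal n c (fun x => p x * 1)). apply cs_ext; intros; ring. Qed.

Lemma expect_prod_coord n m i : (i < n)%nat -> expect n (prod_meas n m) (fun z => z i) = m i.
Proof.
  induction n; intros Hi; [lia|].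
  rewrite expect_prod_S. destruct (Nat.eq_dec i n).
  - subst. transitivity (expect n (prod_meas n m) (fun _ => m n)).
    { rewrite !expect_cs; apply cs_ext; intros; unfold Eop; rewrite !upd_eq; field. }
    rewrite expect_const, expect_prod_one; ring.
  - rewrite <- IHn by lia. rewrite !expect_cs. apply cs_ext. intros. unfold Eop.
    rewrite !upd_neq by lia. field.
Qed.

Lemma Eop_comm a b i j v : i <> j -> Eop a i (Eop b j v) = Eop b j (Eop a i v).
Proof. intros H. apply functional_extensionality; intros x. unfold Eop.
  rewrite !(upd_comm _ i j) by auto. ring. Qed.

Lemma U_comm m k a j v : (k <= j)%nat -> U m k (Eop a j v) = Eop a j (U m k v).
Proof.
  revert v. induction k; intros v H; simpl; auto.
  rewrite Eop_comm by lia. rewrite IHk by lia. auto.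
Qed.

Lemma U_S' m k v : U m (S k) v = Eop (m k) k (U m k v).
Proof. simpl. apply U_comm. lia. Qed.

Lemma U_local m k v x y : (forall j, (k <= j)%nat -> x j = y j) -> U m k v x = U m k v y.
Proof.
  revert x y. induction k; intros x y H.
  - simpl. f_equal. apply functional_extensionality; intros j. apply H; lia.
  - rewrite U_S'. unfold Eop. f_equal; f_equal; apply IHk; intros j Hj;
    unfold upd; destruct (Nat.eqb_spec j k); auto; apply H; lia.
Qed.

Lemma U_const m N v x : iscube N x -> U m N v x = U m N v (cube_pt 0).
Proof. intros Hx. apply U_local. intros j Hj. rewrite (iscube_high N x j) by auto.
  unfold cube_pt. rewrite Nat.bits_0. auto. Qed.

Lemma dpart_U m N k i v c :
  (forall j, (j < N)%nat -> Rabs (m j) <= 1) ->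
  (k <= i)%nat -> (i < N)%nat ->
  (forall y, iscube N y -> Rabs (dpart v i y) <= c) ->
  forall y, iscube N y -> Rabs (dpart (U m k v) i y) <= c.
Proof.
  intros Hm. revert v. induction k; intros v Hk Hi Hv; simpl; auto.
  apply IHk; try lia. intros y Hy.
  assert (E : dpart (Eop (m k) k v) i y =
     (1 + m k) / 2 * dpart v i (upd y k 1) + (1 - m k) / 2 * dpart v i (upd y k (-1))).
  { unfold dpart, Eop. rewrite !(upd_comm _ i k) by lia. field. }
  rewrite E.
  pose proof (Hv _ (iscube_upd N y k 1 Hy ltac:(lia) ltac:(lra))).
  pose proof (Hv _ (iscube_upd N y k (-1) Hy ltac:(lia) ltac:(lra))).
  pose proof (Hm k ltac:(lia)).
  apply Rabs_le. apply Rabs_le_inv2 in H, H0, H1. nra.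
Qed.

Definition tk (n : nat) (p : vec -> R) (k : nat) (x : vec) : R :=
  tanh (dpart (log_dens n p) k x).

Lemma dpart_upd g k x b : dpart g k (upd x k b) = dpart g k x.
Proof. unfold dpart. rewrite !upd_upd. auto. Qed.

Lemma tk_formula n p k x : (k < n)%nat -> iscube n x -> (forall y, iscube n y -> 0 < p y) ->
  tk n p k x = (p (upd x k 1) - p (upd x k (-1))) / (p (upd x k 1) + p (upd x k (-1))).
Proof.
  intros Hk Hx Hp. unfold tk, dpart, log_dens.
  assert (Hc : 0 < INR (ncube n)) by (apply lt_0_INR; unfold ncube; pose proof (Nat.pow_nonzero 2 n); lia).
  pose proof (Hp _ (iscube_upd n x k 1 Hx Hk ltac:(lra))).
  pose proof (Hp _ (iscube_upd n x k (-1) Hx Hk ltac:(lra))).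
  rewrite tanh_ln by (apply Rmult_lt_0_compat; auto).
  field. split; apply Rgt_not_eq; nra.
Qed.

Lemma invariance n p k v : (k < n)%nat -> (forall y, iscube n y -> 0 < p y) ->
  expect n p (fun x => (1 + tk n p k x) / 2 * v (upd x k 1) + (1 - tk n p k x) / 2 * v (upd x k (-1)))
  = expect n p v.
Proof.
  intros Hk Hp. rewrite !expect_cs. rewrite (cs_sym n k (fun x => p x * v x)) by auto.
  rewrite (cs_sym n k) by auto. apply cs_ext. intros x Hx.
  unfold tk. rewrite !dpart_upd, !upd_upd. fold (tk n p k x).
  rewrite tk_formula by auto.
  pose proof (Hp _ (iscube_upd n x k 1 Hx Hk ltac:(lra))).
  pose proof (Hp _ (iscube_upd n x k (-1) Hx Hk ltac:(lra))).
  field. apply Rgt_not_eq; lra.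
Qed.

Lemma stein_step n p k a v : (k < n)%nat -> (forall y, iscube n y -> 0 < p y) ->
  expect n p v - expect n p (Eop a k v) = expect n p (fun x => (tk n p k x - a) * dpart v k x).
Proof.
  intros Hk Hp. rewrite <- (invariance n p k v) by auto.
  rewrite !expect_cs, <- cs_minus. apply cs_ext; intros. unfold Eop, dpart. field.
Qed.

Lemma mean_tk n p k : (k < n)%nat -> (forall y, iscube n y -> 0 < p y) ->
  expect n p (tk n p k) = expect n p (fun x => x k).
Proof.
  intros Hk Hp. rewrite <- (invariance n p k (fun x => x k)) by auto.
  rewrite !expect_cs. apply cs_ext; intros. rewrite !upd_eq. field.
Qed.

Lemma rmaxl_ge N a g k : (k < N)%nat -> g k <= rmaxl N a g.
Proof. induction N; intros H; [lia|]. simpl. destruct (Nat.eq_dec k N).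
  subst. apply Rmax_r. eapply Rle_trans; [apply IHN; lia|apply Rmax_l]. Qed.
Lemma rmaxl_ge_a N a g : a <= rmaxl N a g.
Proof. induction N; simpl; [lra|]. eapply Rle_trans; [apply IHN|apply Rmax_l]. Qed.

Lemma L2_ge1 n f : 1 <= L2 n f.
Proof. unfold L2. apply rmaxl_ge_a. Qed.

Lemma L2_bound n f a b : (a < 2 ^ n)%nat -> (b < 2 ^ n)%nat -> a <> b ->
  grad_diff_ratio n f a b <= L2 n f.
Proof.
  intros Ha Hb Hab. unfold L2.
  eapply Rle_trans; [|apply (rmaxl_ge _ _ _ a); exact Ha].
  eapply Rle_trans; [|apply (rmaxl_ge _ _ _ b); exact Hb].
  cbv beta. destruct (Nat.eqb_spec a b); [lia|lra].
Qed.

Lemma norm1_upd n x i : (i < n)%nat -> norm1 n (fun j => upd x i 1 j - upd x i (-1) j) = 2.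
Proof.
  intros Hi. unfold norm1. rewrite (rsum_single n i) by (auto; intros; rewrite !upd_neq by auto;
    replace (x k - x k) with 0 by ring; apply Rabs_R0).
  rewrite !upd_eq. replace (1 - -1) with 2 by ring. apply Rabs_pos_eq; lra.
Qed.

Lemma grad_lip n f y i : iscube n y -> (i < n)%nat ->
  norm1 n (fun j => dpart f j (upd y i 1) - dpart f j (upd y i (-1))) <= 2 * L2 n f.
Proof.
  intros [k [Hk ->]] Hi.
  assert (Hs : Nat.setbit k i <> Nat.clearbit k i).
  { intros E. pose proof (Nat.setbit_eq k i). rewrite E, Nat.clearbit_eq in H. discriminate. }
  pose proof (L2_bound n f _ _ (setbit_lt k i n Hk Hi) (clearbit_lt k i n Hk) Hs) as HL.
  unfold grad_diff_ratio in HL. rewrite <- upd_cube_1, <- upd_cube_m1 in HL.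
  rewrite norm1_upd in HL by auto.
  lra.
Qed.

Lemma dpart_h_bound n f (m : vec) y i : iscube n y -> (i < n)%nat ->
  Rabs (dpart (fun y => norm1 n (fun j => tanh (dpart f j y) - m j)) i y) <= L2 n f.
Proof.
  intros Hy Hi. unfold dpart at 1. unfold norm1 at 1 2.
  rewrite <- rsum_minus.
  pose proof (grad_lip n f y i Hy Hi) as HG. unfold norm1 in HG.
  unfold Rdiv. rewrite Rabs_mult. rewrite (Rabs_pos_eq (/2)) by lra.
  assert (Rabs (rsum n (fun k => Rabs (tanh (dpart f k (upd y i 1)) - m k) - Rabs (tanh (dpart f k (upd y i (-1))) - m k)))
     <= rsum n (fun j => Rabs (dpart f j (upd y i 1) - dpart f j (upd y i (-1))))).
  { eapply Rle_trans; [apply rsum_abs|]. apply rsum_le. intros k _.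
    eapply Rle_trans; [apply Rabs_triang_inv2|].
    replace (tanh (dpart f k (upd y i 1)) - m k - (tanh (dpart f k (upd y i (-1))) - m k))
      with (tanh (dpart f k (upd y i 1)) - tanh (dpart f k (upd y i (-1)))) by ring.
    apply tanh_lip. }
  lra.
Qed.

Lemma stein_bound n p (m : vec) h c :
  (forall y, iscube n y -> 0 < p y) ->
  expect n p (fun _ => 1) = 1 ->
  (forall j, (j < n)%nat -> Rabs (m j) <= 1) ->
  (forall y i, iscube n y -> (i < n)%nat -> Rabs (dpart h i y) <= c) ->
  expect n (prod_meas n m) h <=
  expect n p h + c * rsum n (fun k => expect n p (fun x => Rabs (tk n p k x - m k))).
Proof.
  intros Hp H1 Hm Hh.
  rewrite expect_prod_U.
  assert (E0 : expect n p (U m n h) = U m n h (cube_pt 0)).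
  { transitivity (expect n p (fun _ => U m n h (cube_pt 0))).
    - rewrite !expect_cs. apply cs_ext. intros x Hx. rewrite (U_const m n h x Hx). auto.
    - rewrite expect_const, H1. ring. }
  rewrite <- E0.
  assert (Tel : expect n p h - expect n p (U m n h) =
     rsum n (fun k => expect n p (U m k h) - expect n p (U m (S k) h))).
  { rewrite (rsum_tele n (fun k => expect n p (U m k h))). reflexivity. }
  assert (Terms : forall k, (k < n)%nat ->
     - (c * expect n p (fun x => Rabs (tk n p k x - m k))) <=
     expect n p (U m k h) - expect n p (U m (S k) h)).
  { intros k Hk. rewrite U_S', stein_step by auto.
    assert (Eq : expect n p (fun x => - c * Rabs (tk n p k x - m k)) = - (c * expect n p (fun x => Rabs (tk n p k x - m k)))).
    { rewrite !expect_cs. rewrite <- cs_scal.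
      rewrite <- (Rmult_1_l (cs n (fun x => c * (p x * Rabs (tk n p k x - m k))))).
      rewrite Ropp_mult_distr_l, <- cs_scal. apply cs_ext; intros; ring. }
    rewrite <- Eq. rewrite !expect_cs.
    apply cs_le. intros x Hx. apply Rmult_le_compat_l; [apply Rlt_le, Hp; auto|].
    pose proof (dpart_U m n k k h c Hm ltac:(lia) Hk (fun y Hy => Hh y k Hy Hk) x Hx) as Hd.
    apply Rabs_le_inv2 in Hd.
    destruct (Rle_dec 0 (tk n p k x - m k)).
    + rewrite Rabs_pos_eq by auto. nra.
    + rewrite Rabs_left by lra. nra. }
  assert (rsum n (fun k => - (c * expect n p (fun x => Rabs (tk n p k x - m k)))) <=
          expect n p h - expect n p (U m n h)).
  { rewrite Tel. apply rsum_le. auto. }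
  rewrite <- (rsum_scal n c) in *.
  rewrite (rsum_ext n _ (fun k => -1 * (c * expect n p (fun x => Rabs (tk n p k x - m k))))) in H
    by (intros; ring).
  rewrite rsum_scal in H. lra.
Qed.

Lemma expect_plus n p g g' : expect n p (fun x => g x + g' x) = expect n p g + expect n p g'.
Proof. rewrite !expect_cs, <- cs_plus. apply cs_ext; intros; ring. Qed.
Lemma expect_minus n p g g' : expect n p (fun x => g x - g' x) = expect n p g - expect n p g'.
Proof. rewrite !expect_cs, <- cs_minus. apply cs_ext; intros; ring. Qed.
Lemma expect_scal n p c g : expect n p (fun x => c * g x) = c * expect n p g.
Proof. rewrite !expect_cs, <- cs_scal. apply cs_ext; intros; ring. Qed.
Lemma expect_ext n p g g' : (forall x, iscube n x -> g x = g' x) -> expect n p g = expect n p g'.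
Proof. intros H. rewrite !expect_cs. apply cs_ext; intros. rewrite H; auto. Qed.
Lemma expect_le n p g g' : (forall x, iscube n x -> 0 <= p x) ->
  (forall x, iscube n x -> g x <= g' x) -> expect n p g <= expect n p g'.
Proof. intros Hp H. rewrite !expect_cs. apply cs_le; intros. apply Rmult_le_compat_l; auto. Qed.
Lemma expect_rsum n p N (F : nat -> vec -> R) :
  expect n p (fun x => rsum N (fun i => F i x)) = rsum N (fun i => expect n p (F i)).
Proof. rewrite expect_cs. rewrite (cs_ext n _ (fun x => rsum N (fun i => p x * F i x))).
  apply cs_rsum. intros. rewrite rsum_scal. auto. Qed.

Lemma rsum_pos N g : (0 < N)%nat -> (forall k, (k < N)%nat -> 0 < g k) -> 0 < rsum N g.
Proof. induction N; intros HN H; [lia|]. simpl. destruct N.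
  simpl. pose proof (H 0%nat ltac:(lia)). lra.
  pose proof (IHN ltac:(lia) ltac:(intros; apply H; lia)). pose proof (H (S N) ltac:(lia)). lra. Qed.

Lemma ncube_pos n : (0 < ncube n)%nat.
Proof. unfold ncube. pose proof (Nat.pow_nonzero 2 n). lia. Qed.

Lemma cs_pos n G : (forall x, iscube n x -> 0 < G x) -> 0 < cs n G.
Proof. intros H. unfold cs. apply rsum_pos. apply ncube_pos. intros. apply H, iscube_pt; auto. Qed.

Lemma dot_upd n (a x : vec) i : (i < n)%nat ->
  dot n a (upd x i 1) - dot n a (upd x i (-1)) = 2 * a i.
Proof.
  intros Hi. unfold dot. rewrite <- rsum_minus.
  rewrite (rsum_single n i) by (auto; intros; rewrite !upd_neq by auto; ring).
  rewrite !upd_eq. ring.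
Qed.

Lemma var_identity n p (t : vec -> R) c : expect n p (fun _ => 1) = 1 ->
  expect n p (fun x => (t x - c) ^ 2) =
  expect n p (fun x => t x * t x) - 2 * c * expect n p t + c ^ 2.
Proof.
  intros H1.
  rewrite (expect_ext n p _ (fun x => (t x * t x - (2 * c) * t x) + c ^ 2 * 1)) by (intros; ring).
  rewrite expect_plus, expect_minus, expect_scal, expect_scal, H1. ring.
Qed.

Lemma jensen n p (d : vec -> R) : (forall x, iscube n x -> 0 <= p x) -> expect n p (fun _ => 1) = 1 ->
  expect n p (fun x => Rabs (d x)) <= sqrt (expect n p (fun x => d x ^ 2)).
Proof.
  intros Hp H1. set (a := expect n p (fun x => Rabs (d x))).
  assert (Ha : 0 <= a).
  { unfold a. rewrite expect_cs. replace 0 with (cs n (fun _ => 0)).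
    apply cs_le. intros. apply Rmult_le_pos; auto. apply Rabs_pos.
    unfold cs. clear. induction (ncube n); simpl; lra. }
  assert (0 <= expect n p (fun x => (Rabs (d x) - a) ^ 2)).
  { rewrite expect_cs. replace 0 with (cs n (fun _ => 0)).
    apply cs_le. intros. apply Rmult_le_pos; auto. apply pow2_ge_0.
    unfold cs. clear. induction (ncube n); simpl; lra. }
  rewrite var_identity in H by auto.
  rewrite (expect_ext n p (fun x => Rabs (d x) * Rabs (d x)) (fun x => d x ^ 2)) in H
    by (intros; rewrite <- Rabs_mult; simpl; rewrite Rmult_1_r; apply Rabs_pos_eq; nra).
  fold a in H.
  rewrite <- (sqrt_pow2 a Ha). apply sqrt_le_1_alt. lra.
Qed.

Lemma pw_nonneg x a : 0 <= pw x a.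
Proof. unfold pw. destruct (Rlt_dec 0 x). unfold Rpower. left; apply exp_pos. lra. Qed.
Lemma pw_pos x a : 0 < x -> pw x a = Rpower x a.
Proof. intros. unfold pw. destruct (Rlt_dec 0 x); [auto|lra]. Qed.
Lemma pw_sq x : pw x (2/3) = pw x (1/3) ^ 2.
Proof. unfold pw. destruct (Rlt_dec 0 x); [|simpl; ring].
  replace (2/3) with (1/3 + 1/3) by field. rewrite Rpower_plus. ring. Qed.
Lemma pw_n (x : R) : 0 <= x -> x * pw x (1/3) = pw x (2/3) ^ 2.
Proof. intros Hx. unfold pw. destruct (Rlt_dec 0 x); [|simpl; ring].
  rewrite <- (Rpower_1 x) at 1 by auto. rewrite <- Rpower_plus. simpl. rewrite Rmult_1_r.
  rewrite <- Rpower_plus. f_equal. field. Qed.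

Lemma sqrt_le_sq a b : 0 <= b -> a <= b ^ 2 -> sqrt a <= b.
Proof. intros Hb H. rewrite <- (sqrt_pow2 b Hb). apply sqrt_le_1_alt. auto. Qed.

Theorem mainTheorem6 (n : nat) (f : vec -> R) (D eps : R) (theta : vec) :
  is_Df n f D ->
  0 < eps ->
  norm2 n theta <= eps * sqrt (INR n) ->
  (forall i : nat, (i < n)%nat -> Rabs (theta i) <= / 4) ->
  trace n (Hmat n (tilt n theta (gibbs n f)))
    <= 256 * (pw (INR n) (1/3) * pw D (2/3) / pw eps (2/3)) ->
  expect n (xi_theta n f theta)
    (fun y => norm1 n (fun i => tanh (dpart f i y)
                               - expect n (xi_theta n f theta) (fun z => z i)))
  <= 64 * L2 n f * (pw (INR n) (2/3) * pw D (1/3) / pw eps (1/3)) + eps * INR n.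
Proof.
  intros _ Heps Hth _ HTr.
  set (Zg := rsum (ncube n) (fun k => exp (f (cube_pt k)))).
  assert (HZg : 0 < Zg) by (apply rsum_pos; [apply ncube_pos|intros; apply exp_pos]).
  assert (HPdef : forall y, gibbs n f y = exp (f y) / Zg) by reflexivity.
  assert (HP : forall y, 0 < gibbs n f y) by (intros; rewrite HPdef; apply Rdiv_lt_0_compat; auto; apply exp_pos).
  set (Z := expect n (gibbs n f) (fun y => exp (dot n theta y))).
  assert (HZ : 0 < Z).
  { unfold Z. rewrite expect_cs. apply cs_pos. intros. apply Rmult_lt_0_compat; auto. apply exp_pos. }
  set (p := tilt n theta (gibbs n f)) in *.
  assert (Hpdef : forall y, p y = gibbs n f y * exp (dot n theta y) / Z) by reflexivity.
  assert (Hp : forall y, 0 < p y).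
  { intros. rewrite Hpdef. apply Rdiv_lt_0_compat; auto. apply Rmult_lt_0_compat; auto; apply exp_pos. }
  assert (H1 : expect n p (fun _ => 1) = 1).
  { rewrite expect_cs. rewrite (cs_ext n _ (fun x => / Z * (gibbs n f x * exp (dot n theta x)))).
    rewrite cs_scal. change (cs n (fun x => gibbs n f x * exp (dot n theta x))) with Z. field; lra.
    intros. rewrite Hpdef. field. lra. }
  set (m := fun i => expect n p (fun x => x i)).
  assert (Hm : forall j, (j < n)%nat -> Rabs (m j) <= 1).
  { intros j Hj. unfold m. apply Rle_trans with (expect n p (fun _ => 1)); [|lra].
    rewrite !expect_cs. eapply Rle_trans; [apply cs_abs|]. apply cs_le. intros x Hx.
    rewrite Rabs_mult, (Rabs_pos_eq (p x)) by (left; auto).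
    destruct (iscube_val n x j Hx) as [-> | ->]; [rewrite Rabs_R1 | rewrite Rabs_left by lra]; lra. }
  set (h := fun y => norm1 n (fun i => tanh (dpart f i y) - m i)).
  assert (LHS : expect n (xi_theta n f theta)
    (fun y => norm1 n (fun i => tanh (dpart f i y) - expect n (xi_theta n f theta) (fun z => z i)))
    = expect n (prod_meas n m) h).
  { change (xi_theta n f theta) with (prod_meas n m). apply expect_ext. intros x _.
    unfold h, norm1. apply rsum_ext. intros. rewrite expect_prod_coord; auto. }
  rewrite LHS.
  pose proof (stein_bound n p m h (L2 n f) (fun y _ => Hp y) H1 Hm
     (fun y i Hy Hi => dpart_h_bound n f m y i Hy Hi)) as HS.
  set (S := rsum n (fun k => expect n p (fun x => Rabs (tk n p k x - m k)))) in HS.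
  assert (dlog : forall x i, (i < n)%nat -> dpart (log_dens n p) i x = dpart f i x + theta i).
  { intros x i Hi.
    assert (Hc : 0 < INR (ncube n)) by (apply lt_0_INR, ncube_pos).
    assert (E : forall y, log_dens n p y = ln (INR (ncube n) / (Zg * Z)) + (f y + dot n theta y)).
    { intros y. unfold log_dens. rewrite Hpdef, HPdef.
      replace (INR (ncube n) * (exp (f y) / Zg * exp (dot n theta y) / Z))
        with (INR (ncube n) / (Zg * Z) * exp (f y + dot n theta y))
        by (rewrite exp_plus; field; split; lra).
      rewrite ln_mult, ln_exp; auto. apply Rdiv_lt_0_compat; auto. apply Rmult_lt_0_compat; auto.
      apply exp_pos. }
    unfold dpart. rewrite !E. pose proof (dot_upd n theta x i Hi). lra. }
  assert (Hh : expect n p h <= S + rsum n (fun i => Rabs (theta i))).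
  { apply Rle_trans with (expect n p (fun x => rsum n (fun i => Rabs (tk n p i x - m i)) + rsum n (fun i => Rabs (theta i)))).
    - apply expect_le. intros; left; auto. intros x Hx. unfold h, norm1. rewrite <- rsum_plus.
      apply rsum_le. intros i Hi.
      unfold tk. rewrite dlog by auto.
      pose proof (tanh_lip (dpart f i x) (dpart f i x + theta i)) as T.
      replace (dpart f i x - (dpart f i x + theta i)) with (- theta i) in T by ring.
      rewrite Rabs_Ropp in T.
      replace (tanh (dpart f i x) - m i) with ((tanh (dpart f i x) - tanh (dpart f i x + theta i)) + (tanh (dpart f i x + theta i) - m i)) by ring.
      eapply Rle_trans; [apply Rabs_triang|]. lra.
    - rewrite expect_plus, expect_rsum, expect_const, H1. unfold S. lra. }
  assert (HV : forall i, (i < n)%nat ->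
     expect n p (fun x => (tk n p i x - m i) ^ 2) = Hmat n p i i).
  { intros i Hi. rewrite var_identity by auto.
    change (Hmat n p i i) with (expect n p (fun x => tk n p i x * tk n p i x) - expect n p (tk n p i) * expect n p (tk n p i)).
    rewrite mean_tk by auto. fold (m i). ring. }
  assert (HV0 : forall i, (i < n)%nat -> 0 <= Hmat n p i i).
  { intros i Hi. rewrite <- HV by auto. rewrite expect_cs. replace 0 with (cs n (fun _ => 0)).
    apply cs_le. intros. apply Rmult_le_pos; [left; auto|apply pow2_ge_0].
    unfold cs. clear. induction (ncube n); simpl; lra. }
  assert (HStr : S <= sqrt (INR n * trace n (Hmat n p))).
  { apply Rle_trans with (rsum n (fun i => sqrt (Hmat n p i i))).
    - unfold S. apply rsum_le. intros i Hi. rewrite <- HV by auto. apply jensen; auto. intros; left; auto.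
    - pose proof (cs_sq n (fun i => sqrt (Hmat n p i i))) as C. cbv beta in C.
      rewrite (rsum_ext n (fun i => sqrt (Hmat n p i i) ^ 2) (fun i => Hmat n p i i)) in C
        by (intros; simpl; rewrite Rmult_1_r; apply sqrt_sqrt; auto).
      assert (0 <= rsum n (fun i => sqrt (Hmat n p i i))) by (apply rsum_nonneg; intros; apply sqrt_pos).
      rewrite <- (sqrt_pow2 _ H). apply sqrt_le_1_alt. unfold trace. lra. }
  assert (Hth1 : rsum n (fun i => Rabs (theta i)) <= eps * INR n).
  { pose proof (cs_sq n (fun i => Rabs (theta i))) as C. cbv beta in C.
    rewrite (rsum_ext n (fun i => Rabs (theta i) ^ 2) (fun i => theta i ^ 2)) in C
      by (intros; apply pow2_abs).
    unfold norm2 in Hth.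
    set (Q := rsum n (fun i => theta i ^ 2)) in *.
    assert (HQ : 0 <= Q) by (apply rsum_nonneg; intros; apply pow2_ge_0).
    pose proof (sqrt_pos Q). pose proof (sqrt_pos (INR n)). pose proof (pos_INR n).
    assert (Q <= eps ^ 2 * INR n).
    { rewrite <- (sqrt_sqrt Q HQ). rewrite <- (sqrt_sqrt (INR n)) by lra.
      replace (eps ^ 2 * (sqrt (INR n) * sqrt (INR n))) with ((eps * sqrt (INR n)) * (eps * sqrt (INR n))) by ring.
      apply Rmult_le_compat; auto. }
    assert (0 <= rsum n (fun i => Rabs (theta i))) by (apply rsum_nonneg; intros; apply Rabs_pos).
    assert (rsum n (fun i => Rabs (theta i)) ^ 2 <= (eps * INR n) ^ 2).
    { eapply Rle_trans; [exact C|]. replace ((eps * INR n)^2) with (INR n * (eps ^ 2 * INR n)) by ring.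
      apply Rmult_le_compat_l; auto. }
    apply Rsqr_incr_0_var; [unfold Rsqr; nra | apply Rmult_le_pos; lra]. }
  set (Y := pw (INR n) (2/3) * pw D (1/3) / pw eps (1/3)).
  assert (HY : 0 <= Y).
  { unfold Y. apply Rmult_le_pos. apply Rmult_le_pos; apply pw_nonneg.
    left. apply Rinv_0_lt_compat. rewrite pw_pos by auto. unfold Rpower; apply exp_pos. }
  assert (Hsq : sqrt (INR n * trace n (Hmat n p)) <= 16 * Y).
  { apply sqrt_le_sq. lra.
    apply Rle_trans with (INR n * (256 * (pw (INR n) (1/3) * pw D (2/3) / pw eps (2/3)))).
    apply Rmult_le_compat_l; auto. apply pos_INR.
    assert (Hpe : 0 < pw eps (1/3)) by (rewrite pw_pos by auto; unfold Rpower; apply exp_pos).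
    rewrite (pw_sq D), (pw_sq eps).
    replace (INR n * (256 * (pw (INR n) (1 / 3) * pw D (1 / 3) ^ 2 / pw eps (1 / 3) ^ 2)))
      with (256 * (INR n * pw (INR n) (1/3)) * pw D (1 / 3) ^ 2 / pw eps (1 / 3) ^ 2)
      by (field; lra).
    rewrite pw_n by apply pos_INR. unfold Y. right. field. lra. }
  pose proof (L2_ge1 n f).
  assert (S <= 16 * Y) by lra.
  assert (0 <= S) by (unfold S; apply rsum_nonneg; intros; rewrite expect_cs;
    replace 0 with (cs n (fun _ => 0)) by (unfold cs; clear; induction (ncube n); simpl; lra);
    apply cs_le; intros; apply Rmult_le_pos; [left; auto|apply Rabs_pos]).
  nra.
Qed.
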